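(* Let $n\le 3$ and let $\mu$ be a valuated matroid of rank $n$ on $[2n]$. Then $L_\mu$ is isotropic if and only if $\mu\in\mathrm{SpDr}(n,2n)$.
   Context: $[2n]=\{1,\dots,n,\bar1,\dots,\bar n\}$ with $\bar{\bar i}=i$; $Si:=S\cup\{i\}$. $\mathbb{T}=\mathbb{R}\cup\{\infty\}$. A valuated matroid of rank $k$ on $[2n]$ is $\mu\in(\mathbb{T}^{\binom{[2n]}{k}}\setminus\{\infty\})/\mathbb{R}(1,\dots,1)$ such that for all $S\in\binom{[2n]}{k-1}$, $T\in\binom{[2n]}{k+1}$, the minimum of $\mu_{T\setminus i}+\mu_{Si}$ over $i\in T\setminus S$ is attained at least twice or is $\infty$. $L_\mu=\{x\in\mathbb{T}^{2n}:\forall T\in\binom{[2n]}{k+1},\ \min_{i\in T}(\mu_{T\setminus i}+x_i)\text{ attained at least twice or }\infty\}$. Points $x,y$ are orthogonal if $\min_{i\in[2n]}(x_i+y_{\bar i})$ is attained at least twice; $L$ is isotropic if any two of its points are orthogonal. $\mathrm{SpDr}(k,2n)$ is the set of valuated matroids $\mu$ of rank $k$ on $[2n]$ such that for every $S\in\binom{[2n]}{k-2}$ the minimum of $\mu_{S\cup\{i,\bar i\}}$ over $i\in[n]$ with $\{i,\bar i\}\cap S=\emptyset$ is attained at least twice (or is $\infty$). *)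

(* Defs.v *)
From HB Require Import structures.
From mathcomp Require Import all_boot all_order all_algebra.
From mathcomp Require Import reals.
Unset Printing Implicit Defensive.
Import Order.TTheory GRing.Theory Num.Theory.
Local Open Scope ring_scope.

Section Trop.
Variable R : realType.

(* T = R ∪ {∞}, with None = ∞ *)
Definition trop := option R.

(* tropical product (ordinary addition, ∞ absorbing) *)
Definition tadd (a b : trop) : trop :=
  match a, b with Some x, Some y => Some (x + y) | _, _ => None end.

Definition tle (a b : trop) : bool :=
  match a, b with
  | _, None => true
  | None, Some _ => false
  | Some x, Some y => x <= y
  end.

Definition min_twice {A : finType} (I : {set A}) (f : A -> trop) : Prop :=
  (forall i, i \in I -> f i = None) \/
  exists i j, [/\ i \in I, j \in I, i != j, f i = f j &
                  forall l, l \in I -> tle (f i) (f l)].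

(* ground set [2n] = {1..n, 1bar..nbar}: (false,i) = i, (true,i) = ibar *)
Definition ground (n : nat) := (bool * 'I_n)%type.
Definition bar {n : nat} (e : ground n) : ground n := (~~ e.1, e.2).

(* a representative of a valuated matroid of rank k on [2n];
   only values on k-subsets are relevant *)
Definition valuated_matroid (n k : nat) (mu : {set ground n} -> trop) : Prop :=
  (exists B : {set ground n}, #|B| = k /\ mu B <> None) /\
  forall S T : {set ground n}, #|S|.+1 = k -> #|T| = k.+1 ->
    min_twice (T :\: S) (fun i => tadd (mu (T :\ i)) (mu (i |: S))).

Definition L_mu (n k : nat) (mu : {set ground n} -> trop) (x : ground n -> trop) : Prop :=
  forall T : {set ground n}, #|T| = k.+1 ->
    min_twice T (fun i => tadd (mu (T :\ i)) (x i)).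

Definition orthogonal (n : nat) (x y : ground n -> trop) : Prop :=
  min_twice [set: ground n] (fun i => tadd (x i) (y (bar i))).

Definition isotropic (n : nat) (L : (ground n -> trop) -> Prop) : Prop :=
  forall x y, L x -> L y -> orthogonal n x y.

Definition SpDr (n k : nat) (mu : {set ground n} -> trop) : Prop :=
  valuated_matroid n k mu /\
  forall S : {set ground n}, #|S| + 2 = k ->
    min_twice [set i : 'I_n | ((false, i) \notin S) && ((true, i) \notin S)]
              (fun i => mu (S :|: [set (false, i); (true, i)])).

End Trop.

(* Main.v *)
Require Import Defs.
From mathcomp Require Import all_boot all_order all_algebra.
From mathcomp Require Import reals.
From mathcomp Require Import zify ring lra.
Import Order.TTheory GRing.Theory Num.Theory.
Local Open Scope ring_scope.

Lemma tle_refl (R : realType) (a : trop R) : tle R a a.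
Proof. by case: a => //= r; rewrite lexx. Qed.

Lemma tadd_None_r (R : realType) (a : trop R) : tadd R a None = None.
Proof. by case: a. Qed.

Lemma mt_eq (R : realType) (A : finType) (I : {set A}) (f g : A -> trop R) :
  (forall i, i \in I -> f i = g i) -> min_twice R I f -> min_twice R I g.
Proof.
move=> E [H|[i [j [Ii Ij ij fij Hm]]]].
  by left=> i Ii; rewrite -E // H.
right; exists i, j; split=> //; first by rewrite -!E.
by move=> l Il; rewrite -!E // Hm.
Qed.

Lemma mt_sub (R : realType) (A : finType) (I J : {set A}) (f : A -> trop R) :
  J \subset I -> (forall i, i \in I -> i \notin J -> f i = None) ->
  min_twice R J f -> min_twice R I f.
Proof.
move=> sJI HN [H|[i [j [Ii Ij ij fij Hm]]]].
  left=> i Ii; case: (boolP (i \in J)) => iJ; [exact: H | exact: HN].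
right; exists i, j; split=> //; try exact: (subsetP sJI).
move=> l Il; case: (boolP (l \in J)) => lJ; first exact: Hm.
by rewrite (HN l) //; case: (f i).
Qed.

Lemma mt_two (R : realType) (A : finType) (I : {set A}) (p q : A) (f : A -> trop R) :
  p \in I -> q \in I ->
  (forall j, j \in I -> j != p -> j != q -> f j = None) ->
  min_twice R I f -> f p = f q.
Proof.
move=> pI qI HN [H|[i [j [Ii Ij ij fij Hm]]]]; first by rewrite !H.
case fi: (f i) => [r|]; last first.
  have allN : forall l, l \in I -> f l = None.
    by move=> l Il; have := Hm l Il; rewrite fi; case: (f l).
  by rewrite !allN.
have ipq : (i == p) || (i == q).
  by apply/negPn/negP; rewrite negb_or => /andP[a b]; rewrite (HN i) in fi.
have jpq : (j == p) || (j == q).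
  apply/negPn/negP; rewrite negb_or => /andP[a b].
  by move: fi; rewrite fij (HN j).
by move: ipq jpq ij fij; case/orP=> /eqP->; case/orP=> /eqP->; rewrite ?eqxx // => _ ->.
Qed.

Lemma mt_one (R : realType) (A : finType) (I : {set A}) (p : A) (f : A -> trop R) :
  p \in I -> (forall j, j \in I -> j != p -> f j = None) ->
  min_twice R I f -> f p = None.
Proof.
move=> pI HN [H|[i [j [Ii Ij ij fij Hm]]]]; first by rewrite H.
have fiN : f i = None.
  case: (eqVneq i p) => [ip|/(HN _ Ii)//].
  by rewrite fij HN // -ip eq_sym.
by have := Hm p pI; rewrite fiN; case: (f p).
Qed.

Lemma mt_pair (R : realType) (A : finType) (p q : A) (f : A -> trop R) :
  p != q -> f p = f q -> min_twice R [set p; q] f.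
Proof.
move=> pq fpq; right; exists p, q; split; rewrite ?inE ?eqxx ?orbT //.
by move=> l; rewrite !inE => /orP[]/eqP->; rewrite ?fpq tle_refl.
Qed.

Lemma mt_pairE (R : realType) (A : finType) (p q : A) (f : A -> trop R) :
  p != q -> min_twice R [set p; q] f -> f p = f q.
Proof.
move=> pq H; apply: (mt_two _ _ _ _ _ _ _ _ _ H); rewrite ?inE ?eqxx ?orbT //.
by move=> j; rewrite !inE => /orP[]->.
Qed.

Lemma mt_unique (R : realType) (A : finType) (I : {set A}) (f : A -> trop R) :
  min_twice R I f \/
  exists i, [/\ i \in I, f i != None & forall j, j \in I -> j != i -> ~~ tle R (f j) (f i)].
Proof.
case: (boolP [exists i in I, f i != None]) => [/existsP[i0 /andP[i0I fi0]]|H]; last first.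
  left; left=> i Ii; apply/eqP; apply: contraNT H => fi.
  by apply/existsP; exists i; rewrite Ii.
pose P := [pred i | (i \in I) && (f i != None)].
have Pi0 : P i0 by rewrite /P /= i0I.
case: (arg_minP (fun i => odflt 0 (f i)) Pi0) => i /andP[iI fiN] Hmin.
case: (boolP [exists j in I, (j != i) && tle R (f j) (f i)]) => [|Hn]; last first.
  right; exists i; split=> // j jI ji; apply: contraNN Hn => H.
  by apply/existsP; exists j; rewrite jI ji.
case/existsP=> j /and3P[jI ji tji].
case fi: (f i) fiN tji => [r|] // _; case fj: (f j) => [s|] //= sr.
have Pj : P j by rewrite /P /= jI fj.
have := Hmin j Pj; rewrite fi fj /= => rs.
have rse : r = s by apply/eqP; rewrite eq_le rs sr.
left; right; exists i, j; split=> //; first by rewrite eq_sym.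
  by rewrite fi fj rse.
move=> l lI; rewrite fi; case fl: (f l) => [t|] //=.
have Pl : P l by rewrite /P /= lI fl.
by have := Hmin l Pl; rewrite fi fl.
Qed.

Lemma exch_big (T : Type) (idx : T) (op : Monoid.com_law idx) (A : finType)
  (B : {set A}) (i j : A) (F : A -> T) :
  i \in B -> j \notin B ->
  op (\big[op/idx]_(l in j |: (B :\ i)) F l) (F i) = op (\big[op/idx]_(l in B) F l) (F j).
Proof.
move=> iB jB; rewrite (big_setD1 i iB) /= big_setU1 /=; last first.
  by rewrite !inE negb_and jB orbT.
by rewrite Monoid.mulmAC [RHS]Monoid.mulmAC; congr (op _ _); rewrite Monoid.mulmC.
Qed.

Lemma card_exch (A : finType) (B : {set A}) (i j : A) :
  i \in B -> j \notin B -> #|j |: (B :\ i)| = #|B|.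
Proof.
move=> iB jB; rewrite cardsU1 (cardsD1 i B) iB !inE negb_and jB orbT.
by [].
Qed.

Lemma duality (R : realType) (n k : nat) (mu : {set ground n} -> trop R)
  (x z : ground n -> trop R) :
  (exists B : {set ground n}, #|B| = k /\ mu B <> None) ->
  L_mu R n k mu x ->
  (forall S : {set ground n}, #|S|.+1 = k ->
     min_twice R (~: S) (fun i => tadd R (mu (i |: S)) (z i))) ->
  min_twice R [set: ground n] (fun i => tadd R (x i) (z i)).
Proof.
move=> [B0 [cB0 mB0]] Hx Hz.
case: (mt_unique R _ [set: ground n] (fun i => tadd R (x i) (z i))) => //.
move=> [I [_ fIN Hlt]]; exfalso.
move: fIN; case xI: (x I) => [xi|] //; case zI: (z I) => [zi|] //= _.
pose xv := fun i => odflt 0 (x i).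
pose zc := fun B : {set ground n} => (\sum_(i in B) (x i == None))%N.
pose Phi := fun B : {set ground n} => odflt 0 (mu B) - \sum_(i in B) xv i.
pose base := [pred B : {set ground n} | (#|B| == k) && (mu B != None)].
have bB0 : base B0 by rewrite /base /= cB0 eqxx; apply/eqP.
case: (arg_maxnP zc bB0) => Bm bBm Hmax.
pose r := zc Bm.
pose P := [pred B | base B && (zc B == r)].
have PBm : P Bm by apply/andP; split.
case: (arg_minP Phi PBm) => B1 PB1 Hmin1.
have [B [PB HminB IB]] : exists B, [/\ P B, forall B', P B' -> Phi B <= Phi B' & I \in B].
  case: (boolP (I \in B1)) => IB1; first by exists B1.
  move: (PB1); rewrite /P /base /= => /andP[/andP[/eqP cB1 mB1] /eqP zB1].
  move: mB1; case mB1: (mu B1) => [m1|] // _.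
  pose T := I |: B1.
  have cT : #|T| = k.+1 by rewrite cardsU1 IB1 cB1.
  have HT := Hx T cT.
  have TD : forall i, i \in B1 -> T :\ i = I |: (B1 :\ i).
    move=> i iB; apply/setP=> l; rewrite !inE.
    case: (eqVneq l I) => [->|lI] /=; last by [].
    by rewrite andbT; apply/eqP=> e; move: IB1; rewrite e iB.
  have HP : forall i a b, i \in B1 -> x i = Some a -> mu (T :\ i) = Some b ->
      P (T :\ i) /\ Phi (T :\ i) = b + a - xi - \sum_(l in B1) xv l.
    move=> i a b iB xa mb.
    have cTi : #|T :\ i| = k by rewrite TD // card_exch.
    have zTi : zc (T :\ i) = r.
      have := exch_big _ 0%N addn _ B1 i I (fun l => (x l == None) : nat) iB IB1.
      by rewrite -TD // xa xI /= !addn0 => E; rewrite /zc E; exact: zB1.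
    split; first by rewrite /P /base /= cTi mb zTi !eqxx.
    have := exch_big _ 0 +%R _ B1 i I xv iB IB1.
    rewrite -TD // /Phi /xv mb xa xI /= => E.
    have E' : \sum_(l in T :\ i) odflt 0 (x l) = \sum_(l in B1) odflt 0 (x l) + xi - a.
      by rewrite -E; ring.
    by rewrite E'; ring.
  have key : forall i, i \in B1 ->
      tle R (Some (m1 + xi)) (tadd R (mu (T :\ i)) (x i)).
    move=> i iB; case xa: (x i) => [a|]; last by rewrite tadd_None_r.
    case mb: (mu (T :\ i)) => [b|] //=.
    have [PTi ETi] := HP i a b iB xa mb.
    have := Hmin1 _ PTi; rewrite ETi /Phi mB1 /= => h.
    lra.
  have TI : T :\ I = B1 by rewrite /T setU1K.
  case: HT => [allN|[i [j [iT jT ij gij Hm]]]].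
    by have := allN I (setU11 _ _); rewrite TI mB1 xI.
  have [i' [i'T i'I Hm']] : exists i', [/\ i' \in T, i' != I &
      forall l, l \in T -> tle R (tadd R (mu (T :\ i')) (x i')) (tadd R (mu (T :\ l)) (x l))].
    case: (eqVneq i I) => [iI|iI]; last by exists i.
    exists j; split=> //; first by rewrite -iI eq_sym.
    by move=> l lT; rewrite -gij; apply: Hm.
  have i'B : i' \in B1 by move: i'T; rewrite !inE (negbTE i'I).
  have h1 := Hm' I (setU11 _ _); have h2 := key i' i'B.
  rewrite TI mB1 xI /= in h1.
  move: h1 h2; case xa: (x i') => [a|] //; case mb: (mu (T :\ i')) => [b|] //= h1 h2.
  have [PTi ETi] := HP i' a b i'B xa mb.
  exists (T :\ i'); split=> //.
  - move=> B' PB'; rewrite ETi; have := Hmin1 B' PB'; rewrite /Phi mB1 /=.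
    lra.
  - by rewrite !inE eq_sym i'I eqxx.
move: (PB); rewrite /P /base /= => /andP[/andP[/eqP cB mB] /eqP zB].
move: mB; case mB: (mu B) => [mb|] // _.
pose S := B :\ I.
have cS : #|S|.+1 = k by rewrite -cB (cardsD1 I B) IB.
have HS := Hz S cS.
have IS : I \in ~: S by rewrite !inE eqxx.
have ISB : I |: S = B by rewrite /S setD1K.
have key2 : forall j, j \in ~: S -> j != I ->
    ~~ tle R (tadd R (mu (j |: S)) (z j)) (tadd R (mu (I |: S)) (z I)).
  move=> j jS jI; rewrite ISB mB zI.
  have jB : j \notin B by move: jS; rewrite !inE jI.
  case mj: (mu (j |: S)) => [b|] //; case zj: (z j) => [c|] //=.
  have cjS : #|j |: S| = k by rewrite card_exch.
  have zjS := exch_big _ 0%N addn _ B I j (fun l => (x l == None) : nat) IB jB.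
  rewrite xI /= addn0 -/(zc B) zB in zjS.
  have hl := Hlt j (in_setT j) jI; rewrite xI zI in hl.
  move: zjS hl; case xj: (x j) => [a|] /= zjS hl; last first.
    have bj : base (j |: S) by rewrite /base /= cjS mj !eqxx.
    have h : (zc (j |: S) <= r)%N := Hmax _ bj.
    move: h; rewrite {1}/zc zjS; lia.
  have PjS : P (j |: S).
    apply/andP; split; first by rewrite /base /= cjS mj eqxx.
    by apply/eqP; rewrite /zc zjS addn0.
  have := HminB _ PjS; rewrite /Phi mB mj /=.
  have := exch_big _ 0 +%R _ B I j xv IB jB; rewrite /xv xI xj /= => E.
  have E' : \sum_(l in j |: S) odflt 0 (x l) = \sum_(l in B) odflt 0 (x l) + a - xi.
    by move: E; rewrite -/S; lra.
  rewrite E' => h.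
  have hl2 : xi + zi < a + c by move: hl; rewrite zj /= -real_ltNge ?num_real.
  have h3 : mb + zi < b + c by clear -h hl2; lra.
  by rewrite -real_ltNge ?num_real.
case: HS => [allN|[i [j [iT jT ij gij Hm]]]].
  by have := allN I IS; rewrite ISB mB zI.
have [i' [i'T i'I Hm']] : exists i', [/\ i' \in ~: S, i' != I &
    forall l, l \in ~: S -> tle R (tadd R (mu (i' |: S)) (z i')) (tadd R (mu (l |: S)) (z l))].
  case: (eqVneq i I) => [iI|iI]; last by exists i.
  exists j; split=> //; first by rewrite -iI eq_sym.
  by move=> l lT; rewrite -gij; apply: Hm.
by have := key2 i' i'T i'I; rewrite Hm'.
Qed.

Lemma bar_bar (n : nat) (j : ground n) : bar (bar j) = j.
Proof. by case: j => [b i]; rewrite /bar /= negbK. Qed.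

Lemma bar_inj (n : nat) : injective (@bar n).
Proof. exact: (can_inj (@bar_bar n)). Qed.

Lemma bar_neq (n : nat) (j : ground n) : bar j != j.
Proof. by case: j => [b i]; rewrite /bar /= xpair_eqE; case: b. Qed.

Lemma pair_of (n : nat) (j a : ground n) : j.2 = a.2 -> j = a \/ j = bar a.
Proof.
case: j a => [bj ij] [ba ia] /= ->; rewrite /bar /=.
by case: bj; case: ba; auto.
Qed.

Definition cc (R : realType) (n : nat) (mu : {set ground n} -> trop R)
  (A : {set ground n}) : ground n -> trop R :=
  fun j => if j \in A then None else mu (j |: A).

Lemma cc_L (R : realType) (n : nat) (mu : {set ground n} -> trop R) (A : {set ground n}) :
  valuated_matroid R n n mu -> #|A|.+1 = n -> L_mu R n n mu (cc R n mu A).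
Proof.
move=> [_ H] cA T cT; have HT := H A T cA cT.
apply: (mt_sub _ _ _ (T :\: A)); first exact: subsetDl.
  move=> i iT iTA; have iA : i \in A by move: iTA; rewrite !inE iT andbT negbK.
  by rewrite /cc iA tadd_None_r.
apply: (mt_eq _ _ _ _ _ _ HT) => i; rewrite !inE => /andP[iA _].
by rewrite /cc (negbTE iA).
Qed.

Definition good (n : nat) (S : {set ground n}) (a b : ground n) : Prop :=
  [/\ #|S|.+2 = n, a.2 != b.2, (a \notin S) && (bar a \notin S),
      (b \notin S) && (bar b \notin S) &
      forall j, [|| j \in S, bar j \in S, j.2 == a.2 | j.2 == b.2]].

Lemma good_sym (n : nat) S (a b : ground n) : good n S a b -> good n S b a.
Proof.
case=> c ab Ha Hb cov; split=> //; first by rewrite eq_sym.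
by move=> j; have := cov j; case: (j \in S); case: (bar j \in S); case: (j.2 == a.2); case: (j.2 == b.2).
Qed.

Lemma good_bar (n : nat) S (a b : ground n) : good n S a b -> good n S (bar a) b.
Proof.
case=> c ab /andP[a1 a2] Hb cov; split=> //; first by rewrite bar_bar a2 a1.
Qed.

Lemma tadd_cancel (R : realType) (p q : trop R) (c : R) :
  tadd R p (Some c) = tadd R (Some c) q -> p = q.
Proof.
case: p => [p|]; case: q => [q|] //= [e]; congr Some.
by apply: (addIr c); rewrite e addrC.
Qed.

Lemma orth_cc (R : realType) (n : nat) (mu : {set ground n} -> trop R) S a b :
  valuated_matroid R n n mu -> isotropic R n (L_mu R n n mu) -> good n S a b ->
  tadd R (mu (bar a |: (a |: S))) (mu (a |: (b |: S))) =
  tadd R (mu (b |: (a |: S))) (mu (bar b |: (b |: S))).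
Proof.
move=> VM Hiso [cS ab /andP[aS baS] /andP[bS bbS] cov].
have cA : #|a |: S|.+1 = n by rewrite cardsU1 aS.
have cB : #|b |: S|.+1 = n by rewrite cardsU1 bS.
have O := Hiso _ _ (cc_L R n mu _ VM cA) (cc_L R n mu _ VM cB).
have anb : a != b by apply: contraNneq ab => ->.
have := mt_two R _ _ (bar a) b _ (in_setT _) (in_setT _) _ O.
rewrite /cc !inE bar_bar (negbTE (bar_neq _ a)) (negbTE baS) (negbTE anb) (negbTE aS).
rewrite eq_sym (negbTE anb) (negbTE bS) (negbTE bbS) (negbTE (bar_neq _ b)) /=.
apply.
move=> j _ j1 j2; rewrite /cc.
case: (boolP (j \in a |: S)) => // jA.
case: (boolP (bar j \in b |: S)) => [_|bjB]; first by rewrite tadd_None_r.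
exfalso; move: jA bjB; rewrite !inE !negb_or => /andP[ja jS] /andP[bjb bjS].
have := cov j; rewrite (negbTE jS) (negbTE bjS) /= => /orP[] /eqP /pair_of [] e.
- by rewrite e eqxx in ja.
- by rewrite e eqxx in j1.
- by rewrite e eqxx in j2.
- by rewrite e bar_bar eqxx in bjb.
Qed.

Lemma orth_self (R : realType) (n : nat) (mu : {set ground n} -> trop R) S a b :
  valuated_matroid R n n mu -> isotropic R n (L_mu R n n mu) -> good n S a b ->
  mu (b |: (a |: S)) = None -> mu (bar b |: (a |: S)) = None ->
  mu (bar a |: (a |: S)) = None.
Proof.
move=> VM Hiso [cS ab /andP[aS baS] /andP[bS bbS] cov] m1 m2.
have cA : #|a |: S|.+1 = n by rewrite cardsU1 aS.
have cB : #|bar a |: S|.+1 = n by rewrite cardsU1 baS.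
have O := Hiso _ _ (cc_L R n mu _ VM cA) (cc_L R n mu _ VM cB).
have HN : forall j, j \in [set: ground n] -> j != bar a ->
    (fun j => tadd R (cc R n mu (a |: S) j) (cc R n mu (bar a |: S) (bar j))) j = None.
  move=> j _ j1; rewrite /cc.
case: (boolP (j \in a |: S)) => // jA.
case: (boolP (bar j \in bar a |: S)) => [_|bjB]; first by rewrite tadd_None_r.
move: jA bjB; rewrite !inE !negb_or => /andP[ja jS] /andP[bjb bjS].
have := cov j; rewrite (negbTE jS) (negbTE bjS) /= => /orP[] /eqP /pair_of [] e.
- by rewrite e eqxx in ja.
- by rewrite e eqxx in j1.
- by rewrite e m1.
- by rewrite e m2.
have := mt_one R _ _ (bar a) _ (in_setT _) HN O.
rewrite /cc !inE bar_bar (negbTE (bar_neq _ a)) (negbTE baS) eq_sym (negbTE (bar_neq _ a)) (negbTE aS) /=.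
by rewrite setUCA; case: (mu _).
Qed.

Lemma pair_eq (R : realType) (n : nat) (mu : {set ground n} -> trop R) S a b :
  valuated_matroid R n n mu -> isotropic R n (L_mu R n n mu) -> good n S a b ->
  mu (bar a |: (a |: S)) = mu (bar b |: (b |: S)).
Proof.
move=> VM Hiso G.
have Ga' := good_bar _ _ _ _ G.
have Gb' : good n S a (bar b) := good_sym _ _ _ _ (good_bar _ _ _ _ (good_sym _ _ _ _ G)).
have Gab' := good_bar _ _ _ _ Gb'.
have O1 := orth_cc R n mu _ _ _ VM Hiso G.
have O2 := orth_cc R n mu _ _ _ VM Hiso Ga'.
have O3 := orth_cc R n mu _ _ _ VM Hiso Gb'.
have O4 := orth_cc R n mu _ _ _ VM Hiso Gab'.
rewrite !bar_bar in O2 O3 O4.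
rewrite [a |: (b |: S)]setUCA in O1.
rewrite [bar a |: (b |: S)]setUCA [a |: (bar a |: S)]setUCA in O2.
rewrite [a |: (bar b |: S)]setUCA [b |: (bar b |: S)]setUCA in O3.
rewrite [bar a |: (bar b |: S)]setUCA [a |: (bar a |: S)]setUCA [b |: (bar b |: S)]setUCA in O4.
case m1: (mu (b |: (a |: S))) O1 => [c|] O1; first exact: (tadd_cancel _ _ _ c).
case m2: (mu (b |: (bar a |: S))) O2 => [c|] O2; first exact: (tadd_cancel _ _ _ c).
case m3: (mu (bar b |: (a |: S))) O3 => [c|] O3; first exact: (tadd_cancel _ _ _ c).
case m4: (mu (bar b |: (bar a |: S))) O4 => [c|] O4; first exact: (tadd_cancel _ _ _ c).
rewrite (orth_self R n mu _ _ _ VM Hiso G m1 m3).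
rewrite (orth_self R n mu _ _ _ VM Hiso (good_sym _ _ _ _ G)) //.
  by rewrite setUCA.
by rewrite setUCA.
Qed.

Definition Fr (n : nat) (S : {set ground n}) : {set 'I_n} :=
  [set i : 'I_n | ((false, i) \notin S) && ((true, i) \notin S)].

Lemma Fr_card (n : nat) (S : {set ground n}) :
  (n <= 3)%N -> (#|S| + 2)%N = n -> #|Fr n S| = 2%N.
Proof.
move=> n3 cS.
have sub : ~: Fr n S \subset [set j.2 | j in S].
  apply/subsetP => i; rewrite !inE negb_and !negbK => /orP[] h; apply/imsetP.
    by exists (false, i).
  by exists (true, i).
have c1 : (#|~: Fr n S| <= #|[set j.2 | j in S]|)%N := subset_leq_card sub.
have c2 : (#|[set j.2 | j in S]| <= #|S|)%N := leq_imset_card _ _.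
have c3 := cardsC (Fr n S); rewrite card_ord in c3.
have c4 : (#|Fr n S| <= n)%N by rewrite -[X in (_ <= X)%N]card_ord max_card.
case: (posnP #|S|) => [S0|Sp].
  lia.
case/card_gt0P: Sp => s sS.
have c5 : (0 < #|~: Fr n S|)%N.
  apply/card_gt0P; exists s.2; rewrite !inE negb_and !negbK.
  by case: s sS => [[] i] /= ->; rewrite ?orbT.
have : (0 < #|S|)%N by apply/card_gt0P; exists s.
lia.
Qed.

Lemma Fr_cover (n : nat) (S : {set ground n}) (j : ground n) :
  [|| j \in S, bar j \in S | j.2 \in Fr n S].
Proof.
case: j => [[] i]; rewrite /bar /= inE.
  by case: ((true, i) \in S); case: ((false, i) \in S).
by case: ((true, i) \in S); case: ((false, i) \in S).
Qed.

Lemma Fr_notin (n : nat) (S : {set ground n}) (i : 'I_n) (x : ground n) :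
  i \in Fr n S -> x.2 = i -> x \notin S.
Proof.
rewrite inE => /andP[h1 h2]; case: x => [[] j] /= ->; by [].
Qed.

Lemma setpair (n : nat) (S : {set ground n}) (a : ground n) :
  bar a |: (a |: S) = S :|: [set a; bar a].
Proof.
apply/setP=> j; rewrite !inE.
by case: (j == a); case: (j == bar a); case: (j \in S).
Qed.

Lemma iso_SpDr (R : realType) (n : nat) (mu : {set ground n} -> trop R) :
  (n <= 3)%N -> valuated_matroid R n n mu -> isotropic R n (L_mu R n n mu) ->
  SpDr R n n mu.
Proof.
move=> n3 VM Hiso; split=> // S cS.
have := Fr_card n S n3 cS; move/eqP; case/cards2P => p [q [pq FE]].
rewrite -/(Fr n S) FE; apply: mt_pair => //.
have pF : p \in Fr n S by rewrite FE !inE eqxx.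
have qF : q \in Fr n S by rewrite FE !inE eqxx orbT.
have G : good n S (false, p) (false, q).
  split=> //=.
  - have cS2 : (#|S| + 2)%N = n := cS; by apply: etrans cS2; rewrite addn2.
  - by rewrite (Fr_notin _ _ _ _ pF) // (Fr_notin _ _ p) //.
  - by rewrite (Fr_notin _ _ _ _ qF) // (Fr_notin _ _ q) //.
  - move=> j; have := Fr_cover n S j; rewrite FE !inE.
    by case: (j \in S); case: (bar j \in S).
have := pair_eq R n mu _ _ _ VM Hiso G.
by rewrite !setpair.
Qed.

Lemma inPair (n : nat) (p : 'I_n) (x : ground n) :
  (x \in [set ((false, p) : ground n); (true, p)]) = (x.2 == p).
Proof. by case: x => [[] i]; rewrite !inE !xpair_eqE /=; case: (i == p). Qed.

Lemma pair_in (n : nat) (p : 'I_n) (C : {set ground n}) (x : ground n) :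
  (false, p) \in C -> (true, p) \in C -> x.2 = p -> x \in C.
Proof. by case: x => [[] i] /= f t ->. Qed.

Lemma full_pair (n : nat) (C : {set ground n}) (x : ground n) :
  x \in C -> bar x \in C -> [exists p, ((false, p) \in C) && ((true, p) \in C)].
Proof.
case: x => [[] i] /= h1 h2; apply/existsP; exists i; rewrite /bar /= in h2.
  by rewrite h1 h2.
by rewrite h1 h2.
Qed.

Lemma nofull (n : nat) (S : {set ground n}) (x : ground n) :
  (#|S| <= 1)%N -> x \in S -> bar x \notin S.
Proof.
move=> c1 xS; apply/negP => bxS.
have sub : [set x; bar x] \subset S by apply/subsetP => j; rewrite !inE => /orP[]/eqP->.
have c2 : (#|[set x; bar x]| <= #|S|)%N := subset_leq_card sub.
by rewrite cards2 eq_sym (bar_neq _ x) in c2; lia.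
Qed.

Lemma sym (R : realType) (n : nat) (mu : {set ground n} -> trop R) :
  (n <= 3)%N -> SpDr R n n mu ->
  forall C : {set ground n}, #|C| = n -> mu C = mu [set j | bar j \notin C].
Proof.
move=> n3 [VM Hsp] C cC.
case: (boolP [exists p, ((false, p) \in C) && ((true, p) \in C)]) => [/existsP[p /andP[fp tp]]|nf].
- pose Pp := [set ((false, p) : ground n); (true, p)].
  have PpC : Pp \subset C by apply/subsetP => j; rewrite !inE => /orP[]/eqP->.
  pose S := C :\: Pp.
  have cPp : #|Pp| = 2%N by rewrite cards2 xpair_eqE.
  have cS : (#|S| + 2)%N = n.
    rewrite cardsD (setIidPr PpC) cPp.
    have c2 : (#|Pp| <= #|C|)%N := subset_leq_card PpC.
    rewrite cPp in c2; lia.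
  have HS := Hsp S cS.
  have fS : forall x, (x \in S) = (x.2 != p) && (x \in C).
    by move=> x; rewrite /S /Pp in_setD inPair.
  have pF : p \in Fr n S by rewrite inE !fS /= eqxx.
  have [q [qp FE']] : exists q, q != p /\ Fr n S = [set p; q].
    have := Fr_card n S n3 cS; move/eqP/cards2P => [x [y [xy FE]]].
    move: (pF); rewrite FE !inE => /orP[]/eqP e.
      by exists y; rewrite e; split; rewrite // eq_sym.
    by exists x; rewrite e; split; rewrite // setUC.
  have S1 : (#|S| <= 1)%N by lia.
  move: HS; rewrite -/(Fr n S) FE' => HS.
  have qp' : p != q by rewrite eq_sym.
  have E := mt_pairE R _ p q _ qp' HS.
  simpl in E.
  have SC : S :|: [set ((false, p) : ground n); (true, p)] = C.
    apply/setP => j; rewrite in_setU fS inPair.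
    case: (eqVneq j.2 p) => [jp|jp] /=; last by rewrite orbF.
    by rewrite (pair_in _ _ _ _ fp tp jp).
  rewrite -{1}SC E; congr (mu _); apply/setP => j.
  rewrite in_setU fS inPair inE.
  have qF : q \in Fr n S by rewrite FE' !inE eqxx orbT.
  have qC : forall x : ground n, x.2 = q -> x \notin C.
    move=> x xq; have := Fr_notin _ _ _ x qF xq; rewrite fS xq qp /=.
    by [].
  case: (eqVneq j.2 p) => jp.
    by rewrite jp (negbTE qp') /= (pair_in _ _ _ (bar j) fp tp).
  case: (eqVneq j.2 q) => jq.
    by rewrite orbT qC.
  rewrite /= orbF.
  have hS : (j \in S) = (j \in C) by rewrite fS jp.
  have hbS : (bar j \in S) = (bar j \in C) by rewrite fS /= jp.
  have := Fr_cover n S j; rewrite FE' hS hbS !inE (negbTE jp) (negbTE jq) !orbF.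
  have n1 := nofull n S j S1; have n2 := nofull n S (bar j) S1.
  rewrite bar_bar hS hbS in n1 n2.
  by case: (j \in C) n1 n2; case: (bar j \in C) => // ->.
- congr (mu _); apply/setP => j; rewrite inE.
  have inj : {in C &, injective (fun c : ground n => c.2)}.
    move=> c d cC' dC e; case: (pair_of _ _ _ e) => // cd.
    by rewrite cd in cC'; move: nf; rewrite (full_pair _ _ d dC cC').
  have img : [set c.2 | c in C] = [set: 'I_n].
    apply/eqP; rewrite eqEcard subsetT /= cardsT card_ord (card_in_imset inj) cC.
    by [].
  case: (boolP (j \in C)) => jC.
    by symmetry; apply/negP => bjC; move: nf; rewrite (full_pair _ _ j jC bjC).
  have : j.2 \in [set c.2 | c in C] by rewrite img inE.
  case/imsetP => c cC' e; case: (pair_of _ _ _ e) => ce.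
    by rewrite ce cC' in jC.
  by rewrite ce bar_bar cC'.
Qed.

Lemma mt_imset (R : realType) (A : finType) (f : A -> A) (I : {set A}) (g : A -> trop R) :
  injective f -> min_twice R (f @: I) g -> min_twice R I (fun i => g (f i)).
Proof.
move=> finj [H|[i' [j' [iI jI ij fij Hm]]]].
  by left=> i Ii; apply: H; apply: imset_f.
case/imsetP: iI => i Ii ei; case/imsetP: jI => j Ij ej.
right; exists i, j; split => //.
- by apply: contraNneq ij => e; rewrite ei ej e.
- by rewrite -ei -ej.
- by move=> l Il; rewrite -ei; apply: Hm; apply: imset_f.
Qed.

Theorem proposition4p12 (R : realType) (n : nat) (mu : {set ground n} -> trop R) :
  (n <= 3)%N -> valuated_matroid R n n mu ->
  (isotropic R n (L_mu R n n mu) <-> SpDr R n n mu).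
Proof.
move=> n3 VM; split => [Hiso|Hsp]; first exact: iso_SpDr.
move=> x y Lx Ly; rewrite /orthogonal.
have Hsym := sym R n mu n3 Hsp.
case: (VM) => Hb _.
apply: (duality R n n mu x (fun i => y (bar i))) => // S cS.
pose T := [set bar j | j in ~: S].
have cT : #|T| = n.+1.
  rewrite card_imset; last exact: bar_inj.
  apply/eqP; rewrite -(eqn_add2l #|S|) cardsC card_prod card_bool card_ord.
  move: (#|S|) cS => s hs; apply/eqP; lia.
have HT := Ly T cT.
have Tmem : forall j, (j \in T) = (bar j \notin S).
  by move=> j; rewrite /T (can2_imset_pre _ (@bar_bar n) (@bar_bar n)) !inE.
have HT' := mt_imset R _ bar (~: S) _ (@bar_inj n) HT.
apply: (mt_eq _ _ _ _ _ _ HT') => i; rewrite inE => iS /=.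
rewrite (Hsym (i |: S)); last by rewrite cardsU1 iS.
congr (tadd R (mu _) _); apply/setP => j; rewrite in_setD1 Tmem !inE negb_or.
by rewrite -(inj_eq (@bar_inj n)) bar_bar.
Qed.
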